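(* Let $G\subset \mathrm{GL}_n(\mathbb{C})$ be a complex reflection group, let $L=\mathbb{C}(x_1,\dots,x_n)$ with the action of $G$ described in the context, and let $\boldsymbol{\phi}=(\phi_1,\dots,\phi_n)$ be an $n$-tuple of fundamental invariants of $G$. Put $K=\mathbb{C}(z_1,\dots,z_n)$ with $z_i=\phi_i(\mathbf{x})$, so $K=L^G\subseteq L$, and let $\delta_i$ ($1\le i\le n$) denote the unique derivation of $L$ extending $\partial/\partial z_i$ on $K$. Let $J_{\boldsymbol{\phi}}=\bigl(\partial\phi_i/\partial x_j\bigr)_{1\le i,j\le n}$ be the Jacobian matrix, and define $A_i:=\delta_i(J_{\boldsymbol{\phi}})\,J_{\boldsymbol{\phi}}^{-1}\in\mathfrak{gl}_n(L)$ for $1\le i\le n$, where $\delta_i$ is applied entrywise. Then: (1) $A_i\in\mathfrak{gl}_n(K)$ for each $1\le i\le n$; (2) $\delta_i(A_j)-\delta_j(A_i)=A_iA_j-A_jA_i$ for all $1\le i,j\le n$; and (3) $L$ is a Picard-Vessiot extension of $K$ for the linear differential system $\{\delta_i(\mathbf{y})=A_i\mathbf{y}\mid 1\le i\le n\}$.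
   Context: A complex reflection is a matrix $M\in\mathrm{GL}_n(\mathbb{C})$ of finite order that fixes pointwise some hyperplane (codimension-one subspace); a complex reflection group is a finite subgroup of $\mathrm{GL}_n(\mathbb{C})$ generated by complex reflections. Such $G$ acts on $S=\mathbb{C}[x_1,\dots,x_n]$ and on $L=\mathbb{C}(x_1,\dots,x_n)$ by $\gamma_M(f)(\mathbf{x})=f(\mathbf{x}\cdot M^{-\top})$, where $\mathbf{x}=(x_1,\dots,x_n)$ is a row vector. A set of fundamental invariants is a tuple $\phi_1,\dots,\phi_n$ of homogeneous, algebraically independent $G$-invariant polynomials with $S^G=\mathbb{C}[\phi_1,\dots,\phi_n]$ (these exist for complex reflection groups), and then $L^G=\mathbb{C}(\phi_1,\dots,\phi_n)$, with $L/K$ a finite Galois extension, so each derivation $\partial/\partial z_i$ of $K$ extends uniquely to a derivation $\delta_i$ of $L$, and these pairwise commute. For a field $F$ with commuting derivations $\delta_1,\dots,\delta_n$, its constants are $C_F=\{c\in F\mid \delta_i(c)=0\ \forall i\}$. Given an integrable system $\{\delta_i(\mathbf{y})=A_i\mathbf{y}\}$ with $A_i\in\mathfrak{gl}_N(K)$, a differential field extension $L\supseteq K$ is a Picard-Vessiot extension for it if $C_L=C_K$ and $L$ is generated as a field over $K$ by the entries of some $U\in\mathrm{GL}_N(L)$ with $\delta_i(U)=A_iU$ for all $i$. *)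

(* Defs.v *)
From HB Require Import structures.
From mathcomp Require Import all_boot all_algebra.
From mathcomp Require Import reals.
From mathcomp.real_closed Require Import complex.
From mathcomp Require Import mpoly.

Set Implicit Arguments.
Unset Strict Implicit.
Unset Printing Implicit Defensive.

Import GRing.Theory.
Local Open Scope ring_scope.

Section Defs.
Variables (C : fieldType) (n : nat).

Definition ratfun := {fraction {mpoly C[n]}}.
Definition toL (p : {mpoly C[n]}) : ratfun := @FracField.tofrac _ p.

(* gamma_M(f)(x) = f(x * M^{-T}), x a row vector:
   x_i is replaced by \sum_j x_j (M^{-T})_{j i} = \sum_j (M^{-1})_{i j} x_j. *)
Definition act_mpoly (M : 'M[C]_n) (f : {mpoly C[n]}) : {mpoly C[n]} :=
  comp_mpoly [tuple \sum_(j < n) (invmx M) i j *: 'X_j | i < n] f.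

(* A complex reflection: finite order, fixes pointwise some hyperplane of C^n
   (column vectors v with M v = v; the rows of H span the hyperplane, as
   row vectors w with w M^T = w). *)
Definition is_reflection (M : 'M[C]_n) : Prop :=
  [/\ M \in unitmx,
      exists k : nat, (0 < k)%N /\ M ^+ k = 1%:M
    & exists H : 'M[C]_n, \rank H = n.-1 /\ H *m M^T = H].

(* A finite subgroup G (given by a finite list of its elements) of GL_n(C)
   generated by complex reflections (every element is a product of
   reflections lying in G). *)
Definition complex_reflection_group (G : seq 'M[C]_n) : Prop :=
  [/\ 1%:M \in G,
      {in G &, forall A B, A *m B \in G},
      {in G, forall A, A \in unitmx /\ invmx A \in G}
    & forall A, A \in G -> exists rs : seq 'M[C]_n,
        [/\ {in rs, forall r, r \in G}, {in rs, forall r, is_reflection r}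
          & A = foldr mulmx 1%:M rs]].

Definition invariant (G : seq 'M[C]_n) (f : {mpoly C[n]}) : Prop :=
  forall M, M \in G -> act_mpoly M f = f.

Definition fundamental_invariants (G : seq 'M[C]_n)
    (phi : n.-tuple {mpoly C[n]}) : Prop :=
  [/\ forall i, exists d : nat, tnth phi i \is d.-homog,
      forall i, invariant G (tnth phi i),
      forall q : {mpoly C[n]}, comp_mpoly phi q = 0 -> q = 0
    &
      forall f, invariant G f <-> exists q : {mpoly C[n]}, f = comp_mpoly phi q].

Definition evphi (phi : n.-tuple {mpoly C[n]}) (p : {mpoly C[n]}) : ratfun :=
  toL (comp_mpoly phi p).

Definition inK (phi : n.-tuple {mpoly C[n]}) (f : ratfun) : Prop :=
  exists p q : {mpoly C[n]}, evphi phi q != 0 /\ f = evphi phi p / evphi phi q.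

Definition is_derivation (d : ratfun -> ratfun) : Prop :=
  forall a b, d (a + b) = d a + d b /\ d (a * b) = d a * b + a * d b.

Definition extends_dz (phi : n.-tuple {mpoly C[n]}) (i : 'I_n)
    (d : ratfun -> ratfun) : Prop :=
  forall p q : {mpoly C[n]}, evphi phi q != 0 ->
    d (evphi phi p / evphi phi q)
    = evphi phi (mderiv i p * q - p * mderiv i q) / evphi phi (q ^+ 2).

Definition jacobian (phi : n.-tuple {mpoly C[n]}) : 'M[ratfun]_n :=
  \matrix_(i < n, j < n) toL (mderiv j (tnth phi i)).

Definition is_subfield (F : ratfun -> Prop) : Prop :=
  [/\ F 0, F 1,
      forall a b, F a -> F b -> F (a - b) /\ F (a * b)
    & forall a, F a -> F a^-1].

Definition picard_vessiot (K : ratfun -> Prop) (delta : 'I_n -> ratfun -> ratfun)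
    (N : nat) (A : 'I_n -> 'M[ratfun]_N) : Prop :=
  (* C_L = C_K *)
  (forall c, (forall i, delta i c = 0) <-> (K c /\ forall i, delta i c = 0)) /\
  (* L = K(entries of U) for a fundamental matrix U in GL_N(L) *)
  exists U : 'M[ratfun]_N,
    [/\ U \in unitmx,
        forall i, map_mx (delta i) U = A i *m U
      & forall F : ratfun -> Prop, is_subfield F -> (forall x, K x -> F x) ->
          (forall a b, F (U a b)) -> forall x, F x].

End Defs.

(* Main.v *)
Require Import Defs.
From HB Require Import structures.
From mathcomp Require Import all_boot all_algebra.
From mathcomp Require Import reals.
From mathcomp.real_closed Require Import complex.
From mathcomp Require Import mpoly.
From mathcomp Require Import ring.
Import GRing.Theory.
Local Open Scope ring_scope.
Set Implicit Arguments.
Unset Strict Implicit.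

Section Frac.
Variable (T : idomainType).
Local Open Scope quotient_scope.
Lemma fracE (f : {fraction T}) : exists p q : T, q != 0 /\ f = (FracField.tofrac p) / (FracField.tofrac q).
Proof.
elim/quotW: f => r.
exists (\n_r), (\d_r); split; first exact: denom_ratioP.
have dn : FracField.tofrac \d_r != 0 by rewrite tofrac_eq0 denom_ratioP.
apply: (mulIf dn); rewrite mulfVK //.
rewrite /FracField.tofrac; unlock FracField.tofrac.
rewrite -[X in X = _]FracField.pi_mul; apply/eqmodP => /=.
rewrite FracField.equivfE /FracField.mulf /= !numden_Ratio ?(oner_neq0, mulf_neq0, denom_ratioP) //.
by rewrite !mulr1 mulrC.
Qed.

Lemma fracR (f : {fraction T}) : \d_(repr f) != 0 /\
  f = (FracField.tofrac \n_(repr f)) / (FracField.tofrac \d_(repr f)).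
Proof.
split; first exact: denom_ratioP.
rewrite -{1}(reprK f); set r := repr f.
have dn : FracField.tofrac \d_r != 0 by rewrite tofrac_eq0 denom_ratioP.
apply: (mulIf dn); rewrite mulfVK //.
rewrite /FracField.tofrac; unlock FracField.tofrac.
rewrite -[X in X = _]FracField.pi_mul; apply/eqmodP => /=.
rewrite FracField.equivfE /FracField.mulf /= !numden_Ratio ?(oner_neq0, mulf_neq0, denom_ratioP) //.
by rewrite !mulr1 mulrC.
Qed.
End Frac.

Section Gen.
Variables (C : fieldType) (n : nat).
Local Notation L := (ratfun C n).
Local Notation toL := (@toL C n).

Lemma toLD p q : toL (p + q) = toL p + toL q. Proof. exact: tofracD. Qed.
Lemma toLB p q : toL (p - q) = toL p - toL q. Proof. exact: tofracB. Qed.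
Lemma toLM p q : toL (p * q) = toL p * toL q. Proof. exact: tofracM. Qed.
Lemma toL1 : toL 1 = 1. Proof. exact: tofrac1. Qed.
Lemma toL0 : toL 0 = 0. Proof. exact: tofrac0. Qed.
Lemma toL_eq0 p : (toL p == 0) = (p == 0). Proof. exact: tofrac_eq0. Qed.
Lemma toL_inj : injective toL.
Proof. by move=> p q /eqP; rewrite /toL tofrac_eq => /eqP. Qed.
Lemma toL_nat k : toL k%:R = k%:R.
Proof. by elim: k => [|k IH]; rewrite ?toL0 // -addn1 !natrD toLD IH toL1. Qed.
Lemma toLE (f : L) : exists p q, q != 0 /\ f = toL p / toL q.
Proof. exact: fracE. Qed.

Lemma mpoly_ind2 (P : {mpoly C[n]} -> Prop) :
  (forall c, P c%:MP) -> (forall i, P 'X_i) ->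
  (forall p q, P p -> P q -> P (p + q)) -> (forall p q, P p -> P q -> P (p * q)) ->
  forall p, P p.
Proof.
move=> hC hX hD hM p; elim/mpolyind: p => [|c m p _ _ hp]; first by rewrite -mpolyC0.
apply: (hD) => //; rewrite -mul_mpolyC; apply: (hM); first exact: (hC).
rewrite mpolyXE_id.
apply: (big_ind P); [by rewrite -mpolyC1 | exact: (hM) | move=> i _].
elim: (m i) => [|k IH]; first by rewrite expr0 -mpolyC1.
by rewrite exprS; apply: (hM).
Qed.

Lemma mderivXU (i j : 'I_n) : ('X_i : {mpoly C[n]})^`M(j) = (i == j)%:R.
Proof.
rewrite mderivX mnm1E; case: eqP => [->|_].
  have -> : (U_(j) - U_(j))%MM = 0%MM :> 'X_{1..n}.
    by apply/mnmP => k; rewrite mnmBE subnn mnm0E.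
  by rewrite mpolyX0 scale1r.
by rewrite scale0r.
Qed.

Section Chain.
Variables (s D : L -> L).
Hypothesis sD : forall a b, s (a + b) = s a + s b.
Hypothesis sM : forall a b, s (a * b) = s a * s b.
Hypothesis s1 : s 1 = 1.
Hypothesis DD : forall a b, D (a + b) = D a + D b.
Hypothesis DM : forall a b, D (a * b) = D a * s b + s a * D b.

Lemma s0 : s 0 = 0.
Proof. have h := sD 0 0; rewrite addr0 in h; by apply: (addrI (s 0)); rewrite -h addr0. Qed.
Lemma D0 : D 0 = 0.
Proof. have h := DD 0 0; rewrite addr0 in h; by apply: (addrI (D 0)); rewrite -h addr0. Qed.
Lemma s_nat k : s k%:R = k%:R.
Proof. by elim: k => [|k IH]; rewrite ?s0 // -addn1 !natrD sD IH s1. Qed.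
Lemma D_sum (I : Type) (r : seq I) (P : pred I) (F : I -> L) :
  D (\sum_(i <- r | P i) F i) = \sum_(i <- r | P i) D (F i).
Proof. exact: (big_morph D DD D0). Qed.
Lemma s_sum (I : Type) (r : seq I) (P : pred I) (F : I -> L) :
  s (\sum_(i <- r | P i) F i) = \sum_(i <- r | P i) s (F i).
Proof. exact: (big_morph s sD s0). Qed.

Hypothesis DC : forall c, D (toL c%:MP) = 0.

Lemma tchain p : D (toL p) = \sum_j s (toL (p^`M(j))) * D (toL 'X_j).
Proof.
elim/mpoly_ind2: p => [c|i|p q hp hq|p q hp hq].
- by rewrite DC big1 // => j _; rewrite mderivC toL0 s0 mul0r.
- rewrite (bigD1 i) //= mderivXU eqxx toL1 s1 mul1r big1 ?addr0 // => j /negPf ne.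
  by rewrite mderivXU eq_sym ne toL0 s0 mul0r.
- rewrite toLD DD hp hq -big_split /=; apply: eq_bigr => j _.
  by rewrite mderivD toLD sD mulrDl.
- rewrite toLM DM hp hq mulr_suml mulr_sumr -big_split /=; apply: eq_bigr => j _.
  rewrite mderivM toLD !toLM sD !sM mulrDl; congr (_ + _).
    by rewrite mulrAC.
  by rewrite mulrA.
Qed.

Hypothesis sinj : forall q, q != 0 -> s (toL q) != 0.
Lemma tzero : (forall p, D (toL p) = 0) -> forall f, D f = 0.
Proof.
move=> h f; have [p [q [q0 ->]]] := toLE f.
have tq : toL q != 0 by rewrite toL_eq0.
have e : toL p = (toL p / toL q) * toL q by rewrite mulfVK.
have := h p; rewrite [in D _]e DM h mulr0 addr0 => /eqP.
by rewrite mulf_eq0 (negPf (sinj q0)) orbF => /eqP.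
Qed.
End Chain.

Section ChainId.
Variables (D : L -> L).
Hypothesis DD : forall a b, D (a + b) = D a + D b.
Hypothesis DM : forall a b, D (a * b) = D a * b + a * D b.
Hypothesis DC : forall c, D (toL c%:MP) = 0.
Lemma chain_id p : D (toL p) = \sum_j toL (p^`M(j)) * D (toL 'X_j).
Proof. by rewrite (@tchain id D). Qed.
Lemma zero_id : (forall p, D (toL p) = 0) -> forall f, D f = 0.
Proof. move=> h f; apply: (@tzero id D) => // q; by rewrite /= toL_eq0. Qed.
End ChainId.

Lemma mx_leibniz (D : L -> L) (DD : forall a b, D (a + b) = D a + D b)
  (DM : forall a b, D (a * b) = D a * b + a * D b) m k l (A : 'M[L]_(m, k)) (B : 'M[L]_(k, l)) :
  map_mx D (A *m B) = map_mx D A *m B + A *m map_mx D B.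
Proof.
apply/matrixP => i j; rewrite !mxE (D_sum DD).
rewrite -big_split /=; apply: eq_bigr => x _; by rewrite DM !mxE.
Qed.

End Gen.

Section Main.
Variables (C : fieldType) (n : nat) (phi : n.-tuple {mpoly C[n]})
  (delta : 'I_n -> ratfun C n -> ratfun C n).
Local Notation L := (ratfun C n).
Local Notation toL := (@toL C n).
Hypothesis hder : forall i, is_derivation (delta i).
Hypothesis hext : forall i, extends_dz phi i (delta i).

Lemma dD i a b : delta i (a + b) = delta i a + delta i b. Proof. exact: (hder i a b).1. Qed.
Lemma dM i a b : delta i (a * b) = delta i a * b + a * delta i b. Proof. exact: (hder i a b).2. Qed.

Lemma delta0 i : delta i 0 = 0.
Proof. exact: (D0 (dD i)). Qed.

Lemma evphi1 : evphi phi 1 = 1.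
Proof. by rewrite /evphi comp_mpoly1 toL1. Qed.

Lemma delta_ev i p : delta i (evphi phi p) = evphi phi (p^`M(i)).
Proof.
have h := hext i; have := h p 1; rewrite evphi1 oner_neq0 divr1 => -> //.
by rewrite -mpolyC1 mderivC mulr0 subr0 mpolyC1 mulr1 expr1n evphi1 divr1.
Qed.

Lemma evphiC c : evphi phi c%:MP = toL c%:MP.
Proof. by rewrite /evphi comp_mpolyC. Qed.

Lemma delta_C i c : delta i (toL c%:MP) = 0.
Proof. by rewrite -evphiC delta_ev mderivC /evphi comp_mpoly0 toL0. Qed.

Lemma delta_nat i k : delta i k%:R = 0.
Proof. by rewrite -toL_nat -mpolyC_nat delta_C. Qed.

Lemma evphiX a : evphi phi 'X_a = toL (tnth phi a).
Proof. by rewrite /evphi comp_mpolyXU (tnth_nth 0). Qed.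

Lemma delta_phi i a : delta i (toL (tnth phi a)) = (a == i)%:R.
Proof. by rewrite -evphiX delta_ev mderivXU /evphi rmorph_nat toL_nat. Qed.

Lemma chain_delta i p : delta i (toL p) = \sum_j toL (p^`M(j)) * delta i (toL 'X_j).
Proof.
exact: (chain_id (dD i) (dM i) (delta_C i)).
Qed.

Definition Bt : 'M[L]_n := \matrix_(k, i) delta i (toL 'X_k).
Local Notation J := (jacobian phi).

Lemma JBt : J *m Bt = 1%:M.
Proof.
apply/matrixP => a i; rewrite !mxE -delta_phi chain_delta.
by apply: eq_bigr => k _; rewrite !mxE.
Qed.

Lemma BtJ : Bt *m J = 1%:M.
Proof. exact: (@mulmx1C L n J Bt JBt). Qed.

Lemma unitJ : J \in unitmx.
Proof. have := (@mulmx1_unit L n J Bt JBt). case => h _. exact h. Qed.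

Lemma invJ : invmx J = Bt.
Proof. by rewrite -[invmx J]mulmx1 -JBt mulmxA (@mulVmx L n J unitJ) mul1mx. Qed.

Lemma kill_vec (v : 'cV[L]_n) : J *m v = 0 -> v = 0.
Proof. by move=> h; rewrite -[v]mul1mx -BtJ -mulmxA h mulmx0. Qed.

Lemma delta_comm i j f : delta i (delta j f) = delta j (delta i f).
Proof.
apply/eqP; rewrite -subr_eq0; apply/eqP.
pose D := fun f => delta i (delta j f) - delta j (delta i f).
have DD : forall a b, D (a + b) = D a + D b.
  by move=> a b; rewrite /D !dD; rewrite addrACA opprD.
have DM : forall a b, D (a * b) = D a * b + a * D b.
  move=> a b; rewrite /D !dM !dD !dM; ring.
have DC : forall c, D (toL c%:MP) = 0.
  by move=> c; rewrite /D !delta_C subrr.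
have DX : forall k, D (toL 'X_k) = 0.
  move=> k; pose v : 'cV[L]_n := \col_k D (toL 'X_k).
  suff /matrixP /(_ k 0) : v = 0 by rewrite !mxE.
  apply: kill_vec; apply/matrixP => a z; rewrite !mxE.
  have := chain_id DD DM DC (tnth phi a).
  rewrite /D !delta_phi !delta_nat subrr => h; rewrite [RHS]h.
  by apply: eq_bigr => x _; rewrite !mxE.
have DP : forall p, D (toL p) = 0.
  move=> p; rewrite (chain_id DD DM DC).
  by rewrite big1 // => x _; rewrite DX mulr0.
exact: (zero_id DM DP f).
Qed.


Lemma map_delta1 i : map_mx (delta i) (1%:M : 'M[L]_n) = 0.
Proof. by apply/matrixP => a b; rewrite !mxE delta_nat. Qed.

Lemma dBt i : map_mx (delta i) Bt = - (Bt *m map_mx (delta i) J *m Bt).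
Proof.
have h := mx_leibniz (dD i) (dM i) J Bt.
rewrite JBt map_delta1 in h.
have h2 : J *m map_mx (delta i) Bt = - (map_mx (delta i) J *m Bt).
  by apply/eqP; rewrite -addr_eq0 addrC -h.
by rewrite -[map_mx _ Bt]mul1mx -BtJ -mulmxA h2 mulmxN mulmxA.
Qed.

Lemma ddJ i j : map_mx (delta i) (map_mx (delta j) J) = map_mx (delta j) (map_mx (delta i) J).
Proof. by apply/matrixP => a b; rewrite !mxE delta_comm. Qed.

Lemma integrable i j :
  let A := fun i : 'I_n => map_mx (delta i) J *m invmx J in
  map_mx (delta i) (A j) - map_mx (delta j) (A i) = A i *m A j - A j *m A i.
Proof.
move=> A; rewrite /A invJ.
rewrite !(mx_leibniz (dD _) (dM _)) !dBt ddJ.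
rewrite !mulmxN !mulmxA.
by rewrite opprB addrC addrA subrK.
Qed.

End Main.

Section Poly.
Variables (C : fieldType) (n : nat).
Hypothesis char0 : forall k : nat, (k.+1)%:R != 0 :> C.

Lemma const_poly (p : {mpoly C[n]}) : (forall j, p^`M(j) = 0) -> p = (p@_0%MM)%:MP.
Proof.
move=> h; apply/mpolyP => m; rewrite mcoeffC.
have [->|nz] := eqVneq m 0%MM; first by rewrite mulr1.
rewrite mulr0.
case: (pickP (fun i => 0 < m i)%N) => [i /= hi|h0]; last first.
  by case/eqP: nz; apply/mnmP => i; rewrite mnm0E; have := h0 i => /= /negbT; rewrite lt0n negbK => /eqP.
have le : (U_(i) <= m)%MM.
  by apply/mnm_lepP => k; rewrite mnm1E; case: eqP => [<-|]; rewrite ?hi.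
have := mcoeff_deriv i (m - U_(i))%MM p; rewrite h mcoeff0 submK //.
move/eqP; rewrite eq_sym -mulr_natr mulf_eq0 (negPf (char0 _)) orbF => /eqP.
by [].
Qed.

Lemma msize_deriv (p : {mpoly C[n]}) j : p^`M(j) != 0 -> (msize (p^`M(j)) < msize p)%N.
Proof.
move=> nz; rewrite -(mlead_deg nz).
have hs := mlead_supp nz.
have : p@_(mlead (p^`M(j)) + U_(j)) != 0.
  apply/negP => /eqP h0; move: hs; rewrite mcoeff_msupp mcoeff_deriv h0 mul0rn eqxx //.
rewrite -mcoeff_msupp => /msize_mdeg_lt; rewrite mdegD mdeg1 addn1 //.
Qed.

Lemma eulerX (m : 'X_{1..n}) : \sum_c 'X_c * ('X_[m] : {mpoly C[n]})^`M(c) = (mdeg m)%:R *: 'X_[m].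
Proof.
rewrite mdegE natr_sum scaler_suml; apply: eq_bigr => c _.
rewrite mderivX -scalerAr.
case: (posnP (m c)) => [->|hc]; first by rewrite !scale0r.
congr (_ *: _); rewrite mulrC -mpolyXD submK //.
by apply/mnm_lepP => k; rewrite mnm1E; case: eqP => [<-|]; rewrite ?hc.
Qed.

Lemma euler (p : {mpoly C[n]}) d : p \is d.-homog -> \sum_c 'X_c * p^`M(c) = d%:R *: p.
Proof.
move=> /dhomogP hd.
rewrite {1}[p]mpolyE.
under eq_bigr => c _ do rewrite raddf_sum mulr_sumr.
rewrite exchange_big /= {3}[p]mpolyE scaler_sumr big_seq [RHS]big_seq.
apply: eq_bigr => m hm.
under eq_bigr => c _ do rewrite mderivZ -scalerAr.
rewrite -scaler_sumr eulerX hd // scalerA mulrC -scalerA //.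
Qed.

End Poly.

Section Const.
Variables (C : fieldType) (n : nat).
Hypothesis char0 : forall k : nat, (k.+1)%:R != 0 :> C.
Local Notation L := (ratfun C n).
Local Notation toL := (@toL C n).
Variable E : 'I_n -> L -> L.
Hypothesis ED : forall j a b, E j (a + b) = E j a + E j b.
Hypothesis EM : forall j a b, E j (a * b) = E j a * b + a * E j b.
Hypothesis EtoL : forall j p, E j (toL p) = toL (p^`M(j)).

Lemma const_rat c : (forall j, E j c = 0) -> exists a : C, c = toL a%:MP.
Proof.
move=> hc; have [p [q [q0 ec]]] := toLE c.
suff : forall k q p, (msize q <= k)%N -> q != 0 -> c = toL p / toL q -> exists a : C, c = toL a%:MP.
  by move/(_ _ q p (leqnn _) q0 ec).
elim => [|k IH] {p q q0 ec} q p hk q0 ec.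
  by move: q0; rewrite -msize_poly_eq0; move: hk; rewrite leqn0 => ->.
have tq : toL q != 0 by rewrite toL_eq0.
have key : forall j, toL (p^`M(j)) = c * toL (q^`M(j)).
  move=> j; rewrite -!EtoL.
  have -> : toL p = c * toL q by rewrite ec mulfVK.
  by rewrite EM hc mul0r add0r.
case: (pickP (fun j => q^`M(j) != 0)) => [j /= hj|hall]; last first.
  have hq : forall j, q^`M(j) = 0 by move=> j; have := hall j => /= /negbT; rewrite negbK => /eqP.
  have hp : forall j, p^`M(j) = 0.
    by move=> j; apply: toL_inj; rewrite key hq toL0 mulr0.
  rewrite (const_poly char0 hq) (const_poly char0 hp) in ec.
  have b0 : q@_0%MM != 0.
    by move: q0; rewrite {1}(const_poly char0 hq) mpolyC_eq0.
  exists (p@_0%MM / q@_0%MM); rewrite ec.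
  apply: (mulIf (x := toL (q@_0%MM)%:MP)); first by rewrite toL_eq0 mpolyC_eq0.
  by rewrite mulfVK ?toL_eq0 ?mpolyC_eq0 // -toLM -mpolyCM mulfVK.
have tj : toL (q^`M(j)) != 0 by rewrite toL_eq0.
apply: (IH (q^`M(j)) (p^`M(j))) => //.
  by rewrite -ltnS; apply: leq_trans hk; apply: msize_deriv.
by rewrite key mulfK.
Qed.
End Const.

Section PV.
Variables (C : fieldType) (n : nat) (phi : n.-tuple {mpoly C[n]})
  (delta : 'I_n -> ratfun C n -> ratfun C n).
Local Notation L := (ratfun C n).
Local Notation toL := (@toL C n).
Hypothesis char0 : forall k : nat, (k.+1)%:R != 0 :> C.
Hypothesis hder : forall i, is_derivation (delta i).
Hypothesis hext : forall i, extends_dz phi i (delta i).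
Local Notation J := (jacobian phi).
Local Notation Bt := (Bt delta).

Definition E j (f : L) := \sum_i J i j * delta i f.

Lemma ED j a b : E j (a + b) = E j a + E j b.
Proof. by rewrite /E -big_split; apply: eq_bigr => i _; rewrite (dD hder) mulrDr. Qed.

Lemma EM j a b : E j (a * b) = E j a * b + a * E j b.
Proof.
rewrite /E mulr_suml mulr_sumr -big_split; apply: eq_bigr => i _.
by rewrite (dM hder) mulrDr mulrA mulrCA.
Qed.

Lemma EtoL j p : E j (toL p) = toL (p^`M(j)).
Proof.
rewrite /E.
under eq_bigr => i _ do rewrite (chain_delta hder hext) mulr_sumr.
rewrite exchange_big /=.
have e : forall k, \sum_i J i j * (toL (p^`M(k)) * delta i (toL 'X_k)) = toL (p^`M(k)) * (k == j)%:R.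
  move=> k; have := BtJ hder hext => /matrixP /(_ k j); rewrite !mxE => <-.
  by rewrite mulr_sumr; apply: eq_bigr => i _; rewrite !mxE; ring.
rewrite (eq_bigr _ (fun k _ => e k)) (bigD1 j) //= eqxx mulr1 big1 ?addr0 //.
by move=> k /negPf ->; rewrite mulr0.
Qed.

Lemma constants_inK c : (forall i, delta i c = 0) -> inK phi c.
Proof.
move=> h.
have [|a ->] := const_rat char0 EM EtoL (c := c).
  by move=> j; rewrite /E big1 // => i _; rewrite h mulr0.
exists a%:MP, 1; rewrite evphi1 oner_neq0 divr1 /evphi comp_mpolyC; split => //.
Qed.

Hypothesis hhom : forall i, exists d, tnth phi i \is d.-homog.

Lemma gen_field F : is_subfield F -> (forall x, inK phi x -> F x) ->
  (forall a b, F (J a b)) -> forall x, F x.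
Proof.
case=> F0 F1 Fbm Finv hK hJ.
have FB a b : F a -> F b -> F (a - b) by move=> ha hb; case: (Fbm a b ha hb).
have FM a b : F a -> F b -> F (a * b) by move=> ha hb; case: (Fbm a b ha hb).
have FN a : F a -> F (- a) by move=> ha; rewrite -sub0r; apply: (FB).
have FD a b : F a -> F b -> F (a + b) by move=> ha hb; rewrite -[b]opprK; apply: (FB) => //; apply: (FN).
have Fsum : forall (I : Type) (r : seq I) (P : pred I) (G : I -> L),
    (forall i, F (G i)) -> F (\sum_(i <- r | P i) G i).
  by move=> I r P G hG; apply: big_ind => // i _; apply: hG.
have Fprod : forall (I : Type) (r : seq I) (P : pred I) (G : I -> L),
    (forall i, F (G i)) -> F (\prod_(i <- r | P i) G i).
  by move=> I r P G hG; apply: big_ind => // i _; apply: hG.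
have Fsign k : F ((-1) ^+ k).
  by elim: k => [|k IH]; rewrite ?expr0 // exprS; apply: (FM) => //; apply: (FN).
have Fdet : forall m (A : 'M[L]_m), (forall a b, F (A a b)) -> F (\det A).
  move=> m A hA; rewrite /determinant; apply: (Fsum) => s; apply: (FM) => //.
  by apply: (Fprod) => i.
have FBt a b : F (Bt a b).
  rewrite -(invJ hder hext) /invmx (unitJ hder hext) !mxE.
  apply: (FM); first by apply: (Finv); apply: (Fdet).
  rewrite /cofactor; apply: (FM) => //; apply: (Fdet) => x y; rewrite !mxE; have := hJ (lift b x) (lift a y); rewrite mxE; exact.
have Fnat k : F k%:R.
  elim: k => [|k IH]; first exact: F0.
  by rewrite -addn1 natrD; apply: (FD).
have Fphi : forall a, F (toL (tnth phi a)).
  move=> a; apply: (hK); exists 'X_a, 1; rewrite evphi1 oner_neq0 divr1 evphiX; split => //.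
have Fv a : F (\sum_c toL 'X_c * J a c).
  have [d hd] := hhom a.
  have -> : \sum_c toL 'X_c * J a c = d%:R * toL (tnth phi a).
    rewrite -toL_nat -toLM.
    have -> : (d%:R * tnth phi a) = (\sum_c 'X_c * (tnth phi a)^`M(c)).
      by rewrite (euler hd) -mul_mpolyC mpolyC_nat.
    rewrite /toL rmorph_sum; apply: eq_bigr => c _; rewrite !mxE rmorphM //.
  by apply: (FM).
have FX c : F (toL 'X_c).
  pose xv : 'cV[L]_n := \col_c toL 'X_c.
  have e : xv = Bt *m (J *m xv).
    by rewrite mulmxA (BtJ hder hext) mul1mx.
  have -> : toL 'X_c = xv c 0 by rewrite mxE.
  rewrite e mxE; apply: (Fsum) => a; apply: (FM) => //.
  have -> : (J *m xv) a 0 = \sum_c toL 'X_c * J a c.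
    by rewrite mxE; apply: eq_bigr => x _; rewrite [xv _ _]mxE mulrC.
  exact: (Fv a).
have Fpoly p : F (toL p).
  elim/mpoly_ind2: p => [c|c|p q hp hq|p q hp hq]; [|exact: (FX)| rewrite toLD; exact: (FD) | rewrite toLM; exact: (FM)].
  by apply: (hK); exists c%:MP, 1; rewrite evphi1 oner_neq0 divr1 evphiC; split => //.
move=> x; have [p [q [q0 ->]]] := toLE x.
by apply: (FM) => //; apply: (Finv).
Qed.
End PV.

Section Act.
Variables (C : fieldType) (n : nat).
Local Notation L := (ratfun C n).
Local Notation toL := (@toL C n).
Local Notation act := (@act_mpoly C n).

Lemma invmx_mul (A B : 'M[C]_n) : A \in unitmx -> B \in unitmx ->
  invmx (A *m B) = invmx B *m invmx A.
Proof.
move=> uA uB.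
have uAB : A *m B \in unitmx by rewrite unitmx_mul uA uB.
have e : (A *m B) *m (invmx B *m invmx A) = 1%:M.
  by rewrite -mulmxA (mulmxA B) (mulmxV uB) mul1mx (mulmxV uA).
by rewrite -[invmx (A *m B)]mulmx1 -e mulmxA (mulVmx uAB) mul1mx.
Qed.

Lemma actC M c : act M c%:MP = c%:MP.
Proof. by rewrite /act_mpoly comp_mpolyC. Qed.
Lemma actD M p q : act M (p + q) = act M p + act M q.
Proof. by rewrite /act_mpoly comp_mpolyD. Qed.
Lemma actM M p q : act M (p * q) = act M p * act M q.
Proof. by rewrite /act_mpoly rmorphM. Qed.
Lemma act1 M : act M 1 = 1.
Proof. by rewrite /act_mpoly comp_mpoly1. Qed.
Lemma actX M i : act M 'X_i = \sum_j (invmx M) i j *: 'X_j.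
Proof. by rewrite /act_mpoly comp_mpolyXU -tnth_nth tnth_mktuple. Qed.
Lemma actZ M c p : act M (c *: p) = c *: act M p.
Proof. by rewrite /act_mpoly comp_mpolyZ. Qed.
Lemma act_sum M (I : Type) (r : seq I) (P : pred I) (F : I -> {mpoly C[n]}) :
  act M (\sum_(i <- r | P i) F i) = \sum_(i <- r | P i) act M (F i).
Proof. by rewrite /act_mpoly raddf_sum. Qed.

Lemma act_comp M N f : M \in unitmx -> N \in unitmx ->
  act M (act N f) = act (M *m N) f.
Proof.
move=> uM uN; elim/mpoly_ind2: f => [c|i|p q hp hq|p q hp hq].
- by rewrite !actC.
- rewrite !actX act_sum invmx_mul //.
  under eq_bigr => j _ do rewrite actZ actX scaler_sumr.
  rewrite exchange_big /=; apply: eq_bigr => k _.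
  by rewrite mxE scaler_suml; apply: eq_bigr => j _; rewrite scalerA.
- by rewrite !actD hp hq.
- by rewrite !actM hp hq.
Qed.

Lemma act_id f : act 1%:M f = f.
Proof.
rewrite /act_mpoly invmx1.
have -> : [tuple \sum_(j < n) (1%:M : 'M[C]_n) i j *: 'X_j | i < n] = [tuple 'X_i | i < n].
  apply: eq_from_tnth => i; rewrite !tnth_mktuple (bigD1 i) //= mxE eqxx scale1r big1 ?addr0 //.
  by move=> j /negPf nj; rewrite mxE eq_sym nj scale0r.
exact: comp_mpoly_id.
Qed.

Lemma act_inj M : M \in unitmx -> injective (act M).
Proof.
move=> uM p q e.
have h : forall f, act (invmx M) (act M f) = f.
  by move=> f; rewrite act_comp ?unitmx_inv // (mulVmx uM) act_id.
by rewrite -(h p) -(h q) e.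
Qed.

Lemma act_eq0 M p : M \in unitmx -> (act M p == 0) = (p == 0).
Proof.
move=> uM; apply/eqP/eqP => [h|->]; last by rewrite -mpolyC0 actC.
by apply: (act_inj uM); rewrite h -mpolyC0 actC.
Qed.
End Act.

Section Gam.
Variables (C : fieldType) (n : nat).
Local Notation L := (ratfun C n).
Local Notation toL := (@toL C n).
Local Notation act := (@act_mpoly C n).
Local Open Scope quotient_scope.

Definition gam (M : 'M[C]_n) (f : L) : L :=
  toL (act M \n_(repr f)) / toL (act M \d_(repr f)).

Variable M : 'M[C]_n.
Hypothesis uM : M \in unitmx.

Lemma gamE p q : q != 0 -> gam M (toL p / toL q) = toL (act M p) / toL (act M q).
Proof.
move=> q0; rewrite /gam; set f := toL p / toL q.
have [d0 ef] := fracR f.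
set a := \n_(repr f) in ef *; set b := \d_(repr f) in d0 ef *.
have tq : toL q != 0 by rewrite toL_eq0.
have tb : toL b != 0 by rewrite toL_eq0.
have e1 : a * q = p * b.
  have := ef; rewrite /f => /eqP; rewrite (@eqr_div L _ _ _ _ tq tb) => /eqP h.
  apply: toL_inj; rewrite !toLM h; reflexivity.
have ab : toL (act M b) != 0 by rewrite toL_eq0 act_eq0.
have aq : toL (act M q) != 0 by rewrite toL_eq0 act_eq0.
apply/eqP; rewrite (@eqr_div L _ _ _ _ ab aq) -!toLM -!actM e1; exact: eqxx.
Qed.

Lemma gam_toL p : gam M (toL p) = toL (act M p).
Proof.
have := gamE p (oner_neq0 _); rewrite toL1 divr1 => ->.
rewrite act1 toL1 divr1; reflexivity.
Qed.

Lemma gamD f g : gam M (f + g) = gam M f + gam M g.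
Proof.
have [p [q [q0 ->]]] := toLE f; have [p' [q' [q0' ->]]] := toLE g.
have tq : toL q != 0 by rewrite toL_eq0.
have tq' : toL q' != 0 by rewrite toL_eq0.
have aq : toL (act M q) != 0 by rewrite toL_eq0 act_eq0.
have aq' : toL (act M q') != 0 by rewrite toL_eq0 act_eq0.
have -> : toL p / toL q + toL p' / toL q' = toL (p * q' + p' * q) / toL (q * q').
  rewrite toLD !toLM (@addf_div L _ _ _ _ tq tq'); reflexivity.
rewrite !gamE ?mulf_neq0 // actD !actM toLD !toLM (@addf_div L _ _ _ _ aq aq'); reflexivity.
Qed.

Lemma gamM f g : gam M (f * g) = gam M f * gam M g.
Proof.
have [p [q [q0 ->]]] := toLE f; have [p' [q' [q0' ->]]] := toLE g.
have -> : toL p / toL q * (toL p' / toL q') = toL (p * p') / toL (q * q').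
  rewrite !toLM (@mulf_div L); reflexivity.
rewrite !gamE ?mulf_neq0 // !actM !toLM (@mulf_div L); reflexivity.
Qed.

Lemma gam1 : gam M 1 = 1.
Proof. rewrite -toL1 gam_toL act1; reflexivity. Qed.

Lemma gam_neq0 q : q != 0 -> gam M (toL q) != 0.
Proof. by move=> q0; rewrite gam_toL toL_eq0 act_eq0. Qed.
End Gam.

Section MxMorph.
Variables (C : fieldType) (n : nat).
Local Notation L := (ratfun C n).
Variable s : L -> L.
Hypothesis sD : forall a b, s (a + b) = s a + s b.
Hypothesis sM : forall a b, s (a * b) = s a * s b.
Hypothesis s1 : s 1 = 1.
Lemma map_mxM_s m k l (A : 'M[L]_(m, k)) (B : 'M[L]_(k, l)) :
  map_mx s (A *m B) = map_mx s A *m map_mx s B.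
Proof.
apply/matrixP => i j; rewrite !mxE (s_sum sD).
apply: eq_bigr => x _; rewrite sM !mxE; reflexivity.
Qed.
Lemma map_mx1_s : map_mx s (1%:M : 'M[L]_n) = 1%:M.
Proof. apply/matrixP => i j; rewrite !mxE (s_nat sD s1); reflexivity. Qed.
End MxMorph.

Section GA.
Variables (C : fieldType) (n : nat) (phi : n.-tuple {mpoly C[n]})
  (delta : 'I_n -> ratfun C n -> ratfun C n).
Local Notation L := (ratfun C n).
Local Notation toL := (@toL C n).
Local Notation act := (@act_mpoly C n).
Hypothesis hder : forall i, is_derivation (delta i).
Hypothesis hext : forall i, extends_dz phi i (delta i).
Local Notation J := (jacobian phi).
Local Notation Bt := (Bt delta).
Variable M : 'M[C]_n.
Hypothesis uM : M \in unitmx.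
Hypothesis hinv : forall a, act M (tnth phi a) = tnth phi a.
Local Notation s := (gam M).

Lemma sJBt : map_mx s J *m map_mx s Bt = 1%:M.
Proof.
rewrite -(map_mxM_s (gamD uM) (gamM uM)) (JBt hder hext).
exact: (map_mx1_s (gamD uM) (gam1 uM)).
Qed.

Lemma gam_delta i f : gam M (delta i f) = delta i (gam M f).
Proof.
apply/eqP; rewrite eq_sym -subr_eq0; apply/eqP.
pose D := fun f => delta i (gam M f) - gam M (delta i f).
have DD : forall a b, D (a + b) = D a + D b.
  move=> a b; rewrite /D !(gamD uM) !(dD hder) (gamD uM) addrACA opprD; reflexivity.
have DM : forall a b, D (a * b) = D a * s b + s a * D b.
  move=> a b; rewrite /D !(gamM uM) !(dM hder) (gamD uM) !(gamM uM) mulrBl mulrBr opprD addrACA; reflexivity.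
have DC : forall c, D (toL c%:MP) = 0.
  move=> c; rewrite /D (gam_toL uM) actC (delta_C hext) (s0 (gamD uM)) subrr; reflexivity.
have DX : forall k, D (toL 'X_k) = 0.
  move=> k; pose v : 'cV[L]_n := \col_k D (toL 'X_k).
  suff /matrixP /(_ k 0) : v = 0 by rewrite !mxE.
  have h : map_mx s J *m v = 0.
    apply/matrixP => a z; rewrite !mxE.
    have := tchain (gamD uM) (gamM uM) (gam1 uM) DD DM DC (tnth phi a).
    rewrite /D (gam_toL uM) hinv (delta_phi hext) (s_nat (gamD uM) (gam1 uM)) subrr => e.
    rewrite [RHS]e; apply: eq_bigr => x _; rewrite !mxE; reflexivity.
  have e2 := @mulmx1C L n _ _ sJBt.
  rewrite -[v]mul1mx -e2 -mulmxA h mulmx0; reflexivity.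
have DP : forall p, D (toL p) = 0.
  move=> p; rewrite (tchain (gamD uM) (gamM uM) (gam1 uM) DD DM DC).
  by rewrite big1 // => x _; rewrite DX mulr0.
exact: (tzero DM (gam_neq0 uM) DP f).
Qed.

Definition Mc : 'M[L]_n := map_mx (fun c => toL c%:MP) (invmx M).

Lemma gam_Bt : map_mx s Bt = Mc *m Bt.
Proof.
apply/matrixP => k i; rewrite !mxE gam_delta (gam_toL uM) actX.
have -> : toL (\sum_j (invmx M) k j *: 'X_j) = \sum_j toL ((invmx M) k j)%:MP * toL 'X_j.
  rewrite /toL rmorph_sum; apply: eq_bigr => j _; rewrite -mul_mpolyC rmorphM; reflexivity.
rewrite (D_sum (dD hder i)); apply: eq_bigr => j _.
rewrite (dM hder) (delta_C hext) mul0r add0r !mxE; reflexivity.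
Qed.

Lemma sJMc : map_mx s J *m Mc = J.
Proof.
have h := sJBt; rewrite gam_Bt mulmxA in h.
rewrite -[LHS]mulmx1 -(BtJ hder hext) mulmxA h mul1mx; reflexivity.
Qed.

Lemma gam_A i : map_mx s (map_mx (delta i) J *m Bt) = map_mx (delta i) J *m Bt.
Proof.
have hA : map_mx (delta i) J *m Bt = - (J *m map_mx (delta i) Bt).
  have h := mx_leibniz (dD hder i) (dM hder i) J Bt.
  rewrite (JBt hder hext) (map_delta1 hext) in h.
  apply/eqP; rewrite -addr_eq0 -h; exact: eqxx.
have sN : forall a, s (- a) = - s a.
  move=> a; apply/eqP; rewrite -addr_eq0 -(gamD uM) addNr (s0 (gamD uM)); exact: eqxx.
have mN : forall A : 'M[L]_n, map_mx s (- A) = - map_mx s A.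
  move=> A; apply/matrixP => a b; rewrite !mxE sN; reflexivity.
rewrite hA mN (map_mxM_s (gamD uM) (gamM uM)).
have -> : map_mx s (map_mx (delta i) Bt) = map_mx (delta i) (map_mx s Bt).
  apply/matrixP => a b; rewrite !mxE gam_delta; reflexivity.
rewrite gam_Bt (mx_leibniz (dD hder i) (dM hder i)).
have -> : map_mx (delta i) Mc = 0.
  apply/matrixP => a b; rewrite !mxE (delta_C hext); reflexivity.
rewrite mul0mx add0r mulmxA sJMc; reflexivity.
Qed.
End GA.

Section Linv.
Variables (C : fieldType) (n : nat) (phi : n.-tuple {mpoly C[n]}) (G : seq 'M[C]_n).
Local Notation L := (ratfun C n).
Local Notation toL := (@toL C n).
Local Notation act := (@act_mpoly C n).
Hypothesis hG1 : 1%:M \in G.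
Hypothesis hGM : {in G &, forall A B, A *m B \in G}.
Hypothesis hGU : {in G, forall A, A \in unitmx /\ invmx A \in G}.
Hypothesis hinvar : forall f, Defs.invariant G f -> exists q, f = comp_mpoly phi q.

Lemma Linv f : (forall M, M \in G -> gam M f = f) -> inK phi f.
Proof.
move=> hf; have [p [q [q0 ef]]] := toLE f.
pose Gs := undup G.
have uG : forall M, M \in Gs -> M \in unitmx.
  by move=> M; rewrite mem_undup => /hGU [].
pose Q := \prod_(M <- Gs) act M q.
pose R := \prod_(M <- rem 1%:M Gs) act M q.
have eQ : Q = q * R.
  by rewrite /Q (big_rem (1%:M)) ?mem_undup //= act_id.
have Q0 : Q != 0.
  rewrite prodf_seq_neq0; apply/allP => M hM /=; rewrite act_eq0 //; exact: uG.
have R0 : R != 0 by move: Q0; rewrite eQ mulf_eq0 negb_or => /andP[].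
have hperm : forall N, N \in G -> perm_eq (map (mulmx N) Gs) Gs.
  move=> N hN; have [uN iN] := hGU hN.
  apply: uniq_perm; last first.
  - move=> x; apply/mapP/idP => [[A hA ->]|hx].
      by rewrite mem_undup; apply: hGM => //; rewrite -mem_undup.
    exists (invmx N *m x); last by rewrite mulmxA (mulmxV uN) mul1mx.
    by rewrite mem_undup; apply: hGM => //; rewrite -mem_undup.
  - exact: undup_uniq.
  - rewrite map_inj_in_uniq ?undup_uniq // => A B _ _ /= e.
    by rewrite -[A]mul1mx -[B]mul1mx -(mulVmx uN) -!mulmxA e.
have invQ : Defs.invariant G Q.
  move=> N hN; have [uN _] := hGU hN.
  rewrite /Q /act_mpoly rmorph_prod /=.
  rewrite -[RHS](perm_big _ (hperm N hN)) big_map !big_seq; apply: eq_bigr => M hM.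
  rewrite -/(act_mpoly _ _) -/(act_mpoly N _) act_comp //; exact: uG.
have ef2 : f = toL (p * R) / toL Q.
  rewrite ef eQ !toLM; apply/eqP; rewrite (@eqr_div L) ?mulf_neq0 ?toL_eq0 //.
  apply/eqP; rewrite mulrA mulrAC; reflexivity.
have invP : Defs.invariant G (p * R).
  move=> N hN; have [uN _] := hGU hN.
  have := hf N hN; rewrite {1}ef2 (gamE uN) ?invQ // => e.
  apply: toL_inj; apply: (mulIf (x := (toL Q)^-1)); first by rewrite invr_eq0 toL_eq0.
  rewrite e ef2; reflexivity.
have [p1 e1] := hinvar invP; have [q1 e2] := hinvar invQ.
exists p1, q1; rewrite /evphi -e1 -e2 toL_eq0; split => //.
Qed.
End Linv.


Theorem theorem4p1 (R : realType) (n : nat) (G : seq 'M[complex R]_n)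
    (phi : n.-tuple {mpoly (complex R)[n]})
    (delta : 'I_n -> ratfun (complex R) n -> ratfun (complex R) n) :
  complex_reflection_group G ->
  fundamental_invariants G phi ->
  (forall i, is_derivation (delta i) /\ extends_dz phi i (delta i)) ->
  let J := jacobian phi in
  let A := fun i : 'I_n => map_mx (delta i) J *m invmx J in
  [/\ forall i (a b : 'I_n), inK phi (A i a b),
      forall i j : 'I_n,
        map_mx (delta i) (A j) - map_mx (delta j) (A i) = A i *m A j - A j *m A i
    & picard_vessiot (inK phi) delta A].
Proof.
move=> [hG1 hGM hGU _] [hhom hinv _ hinvar] hd J A.
have hder : forall i, is_derivation (delta i) by move=> i; case: (hd i).
have hext : forall i, extends_dz phi i (delta i) by move=> i; case: (hd i).
have char0 : forall k : nat, (k.+1)%:R != 0 :> complex R.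
  by move=> k; rewrite Num.Theory.pnatr_eq0.
split.
- move=> i a b; apply: (Linv hG1 hGM hGU (fun f h => (hinvar f).1 h)) => M hM.
  have [uM _] := hGU M hM.
  have hinvM : forall a, act_mpoly M (tnth phi a) = tnth phi a.
    by move=> a'; apply: hinv.
  have := gam_A hder hext uM hinvM i => /matrixP /(_ a b); rewrite [in X in X = _]mxE => h.
  rewrite /A /J (invJ hder hext); exact: h.
- exact: (integrable hder hext).
- split.
    move=> c; split => [h|[_ h]] //; split => //.
    exact: (constants_inK char0 hder hext h).
  exists J; split.
  + exact: (unitJ hder hext).
  + move=> i; rewrite /A -mulmxA (@mulVmx _ n J (unitJ hder hext)) mulmx1; reflexivity.
  + move=> F hF hK hJ; exact: (gen_field hder hext hhom hF hK hJ).
Qed.
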